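(* Let $\Omega\subseteq\mathbb R^n$ be a bounded open set, let $p_j\to\infty$, and for each $j$ let $\xi_{p_j}\in L^{p_j}(\Omega)$ with $\xi_{p_j}\ge0$ a.e. Suppose there is $\xi_\infty\in L^\infty(\Omega)$ with $\xi_{p_j}\rightharpoonup\xi_\infty$ weakly in $L^k(\Omega)$ for every $k\in(1,\infty)$. Then $$\liminf_{j\to\infty}\int_\Omega\xi_{p_j}\,d[\mu_{p_j}(\xi_{p_j})]\ \ge\ \|\xi_\infty\|_{L^\infty(\Omega)}.$$
   Context: $|x|_{(p)}:=\sqrt{|x|^2+p^{-2}}$, $\|f\|_{\dot L^p(\Omega)}:=\big(\frac{1}{\mathcal L^n(\Omega)}\int_\Omega|f|_{(p)}^p\,d\mathcal L^n\big)^{1/p}$, and $\mu_p(\xi):=\dfrac{|\xi|_{(p)}^{p-2}\,\xi}{\mathcal L^n(\Omega)\,\|\xi\|_{\dot L^p(\Omega)}^{p-1}}\,\mathcal L^n\llcorner\Omega$, so that $\int_\Omega\xi\,d[\mu_p(\xi)]=\frac{1}{\mathcal L^n(\Omega)}\int_\Omega\frac{|\xi|_{(p)}^{p-2}\xi^2}{\|\xi\|_{\dot L^p(\Omega)}^{p-1}}\,d\mathcal L^n$. *)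

(* Defs.v *)
From HB Require Import structures.
From mathcomp Require Import all_boot all_order all_algebra.
From mathcomp Require Import all_classical all_reals all_analysis.
Set Implicit Arguments. Unset Strict Implicit. Unset Printing Implicit Defensive.
Import Order.TTheory GRing.Theory Num.Theory.
Import numFieldNormedType.Exports.
Local Open Scope classical_set_scope.
Local Open Scope ring_scope.

(* R^n is modelled as n.-tuple R with the library's product sigma-algebra
   (generated by the coordinate projections, i.e. the Borel sets of R^n). *)

(* [lam] is n-dimensional Lebesgue measure: it gives every closed box its
   volume.  (This determines the measure uniquely on the sigma-algebra.) *)
Definition is_lebesgue_measure_n {R : realType} (n : nat)
  (lam : {measure set (n.-tuple R) -> \bar R}) : Prop :=
  forall a b : n.-tuple R, (forall i, tnth a i <= tnth b i) ->
    lam [set x | forall i, tnth a i <= tnth x i <= tnth b i]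
    = (\prod_(i < n) (tnth b i - tnth a i))%:E.

Definition open_n {R : realType} (n : nat) (O : set (n.-tuple R)) : Prop :=
  forall x, O x -> exists2 e : R, 0 < e &
    forall y : n.-tuple R, (forall i, `|tnth y i - tnth x i| < e) -> O y.

Definition bounded_n {R : realType} (n : nat) (O : set (n.-tuple R)) : Prop :=
  exists M : R, forall x, O x -> forall i, `|tnth x i| <= M.

Section defs.
Context {R : realType} (n : nat) (lam : {measure set (n.-tuple R) -> \bar R}).

Definition in_Lp (O : set (n.-tuple R)) (p : R) (f : n.-tuple R -> R) : Prop :=
  measurable_fun O f /\
  (\int[lam]_(x in O) ((`|f x| `^ p)%:E) < +oo)%E.

Definition ess_sup_on (O : set (n.-tuple R)) (f : n.-tuple R -> R) : \bar R :=
  ereal_inf [set y : \bar R |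
     \forall x \ae lam, O x -> ((`|f x|)%:E <= y)%E].

Definition in_Linf (O : set (n.-tuple R)) (f : n.-tuple R -> R) : Prop :=
  measurable_fun O f /\ (ess_sup_on O f < +oo)%E.

Definition pabs (p x : R) : R := Num.sqrt (x ^+ 2 + (p ^+ 2)^-1).

Definition dotLnorm (O : set (n.-tuple R)) (p : R) (f : n.-tuple R -> R) : R :=
  ((fine (lam O))^-1 * \int[lam]_(x in O) (pabs p (f x) `^ p)) `^ p^-1.

(* \int_O f d[mu_p(f)]
     = (1/|O|) \int_O |f|_(p)^(p-2) f^2 / ||f||_{\dot L^p(O)}^(p-1) *)
Definition int_against_mu_p (O : set (n.-tuple R)) (p : R)
    (f : n.-tuple R -> R) : R :=
  (fine (lam O))^-1 *
  \int[lam]_(x in O) (pabs p (f x) `^ (p - 2) * f x ^+ 2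
                        / dotLnorm O p f `^ (p - 1)).

End defs.

(* Main.v *)
Require Import Defs.
From HB Require Import structures.
From mathcomp Require Import all_boot all_order all_algebra.
From mathcomp Require Import all_classical all_reals all_analysis.
From mathcomp Require Import ring lra.
Import Order.TTheory GRing.Theory Num.Theory.
Import numFieldNormedType.Exports.
Import measurable_realfun.
Local Open Scope classical_set_scope.
Local Open Scope ring_scope.

Ltac neq0 := try (apply/eqP => ?; lra).
Ltac neqs := repeat (apply/andP; split); neq0.

Section real_facts.
Context {R : realType}.
Implicit Types (p t m x u N : R).

Lemma young_tangent p t m : 1 < p -> 0 <= t -> 0 < m ->
  m `^ (p - 1) * (p * t - (p - 1) * m) <= t `^ p.
Proof.
move=> p1 t0 m0.
have p0 : 0 < p by lra.
have q0 : 0 < p / (p - 1) by apply: divr_gt0; lra.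
have pq : p^-1 + (p / (p - 1))^-1 = 1.
  rewrite invf_div; field; neqs.
have := conjugate_powR t0 (powR_ge0 m (p - 1)) p0 q0 pq.
rewrite -powRrM.
have -> : (p - 1) * (p / (p - 1)) = p by field; neqs.
have -> : m `^ p = m `^ (p - 1) * m.
  have -> : m `^ p = m `^ ((p - 1) + 1) by rewrite subrK.
  by rewrite powRD ?powRr1 ?ltW // (gt_eqF m0) implybT.
set b := m `^ (p - 1); set tp := t `^ p => h.
have b0 : 0 <= b by apply: powR_ge0.
have e : tp / p + b * m / (p / (p - 1)) = (tp + b * m * (p - 1)) / p.
  field; neqs.
rewrite e ler_pdivlMr // in h.
nra.
Qed.
End real_facts.

Section pabs_facts.
Context {R : realType}.
Implicit Types (p t m x u N : R).

Lemma pabs_gt0 p x : 0 < p -> 0 < pabs p x.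
Proof.
move=> p0; rewrite /pabs sqrtr_gt0.
have : 0 < (p ^+ 2)^-1 by rewrite invr_gt0 exprn_gt0.
have := sqr_ge0 x; lra.
Qed.

Lemma pabs_sqr p x : pabs p x ^+ 2 = x ^+ 2 + (p ^+ 2)^-1.
Proof.
rewrite /pabs sqr_sqrtr //; apply: addr_ge0; first exact: sqr_ge0.
by rewrite invr_ge0 sqr_ge0.
Qed.

Lemma pabs_ge p x : 0 < p -> `|x| <= pabs p x.
Proof.
move=> p0; rewrite -sqrtr_sqr /pabs; apply: ler_wsqrtr.
rewrite lerDl invr_ge0; exact: sqr_ge0.
Qed.

Lemma pabs_le p x : 0 < p -> pabs p x <= `|x| + p^-1.
Proof.
move=> p0; rewrite /pabs -(@ger0_norm _ (`|x| + p^-1)); last first.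
  by apply: addr_ge0 => //; rewrite invr_ge0 ltW.
rewrite -sqrtr_sqr; apply: ler_wsqrtr.
rewrite sqrrD exprVn -real_normK ?num_real //.
have : 0 <= `|x| * p^-1 *+ 2 by rewrite mulrn_wge0 // mulr_ge0 // invr_ge0 ltW.
lra.
Qed.

Lemma pabs_pow_le p x : 1 <= p ->
  pabs p x `^ p <= 2 `^ p * `|x| `^ p + (2 / p) `^ p.
Proof.
move=> p1; have p0 : 0 < p by lra.
have hle := pabs_le p x p0.
have ip0 : 0 < p^-1 by rewrite invr_gt0.
have pg0 := pabs_gt0 p x p0.
have nx := normr_ge0 x.
have [hx|hx] := leP p^-1 `|x|.
- have h1 : pabs p x `^ p <= (2 * `|x|) `^ p.
    apply: ge0_ler_powR; rewrite ?nnegrE; try lra.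
  apply: le_trans h1 _.
  rewrite powRM //.
  have := powR_ge0 (2 / p) p; lra.
- have h1 : pabs p x `^ p <= (2 / p) `^ p.
    apply: ge0_ler_powR; rewrite ?nnegrE; try lra.
  apply: le_trans h1 _.
  have := mulr_ge0 (powR_ge0 2 p) (powR_ge0 `|x| p); lra.
Qed.

Lemma abs_le_pow p x : 1 <= p -> `|x| <= 1 * `| `|x| `^ p | + 1.
Proof.
move=> p1; rewrite mul1r (ger0_norm (powR_ge0 _ _)).
have [h|h] := leP `|x| 1.
  have := powR_ge0 `|x| p; lra.
have := le1r_powR (ltW h) p1; lra.
Qed.

Lemma pow_split p u N : 2 <= p -> 0 < u -> 0 < N ->
  u `^ (p - 2) <= N ^- 2 * u `^ p + N `^ (p - 2).
Proof.
move=> p2 u0 N0.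
have hup := powR_ge0 u p.
have hN2 : 0 <= N ^- 2 by rewrite invr_ge0 exprn_ge0 // ltW.
have [h|h] := leP u N.
  have : u `^ (p - 2) <= N `^ (p - 2).
    apply: ge0_ler_powR; rewrite ?nnegrE; try lra.
  have := mulr_ge0 hN2 hup; lra.
have -> : u `^ (p - 2) = u `^ p / u ^+ 2.
  rewrite powRB ?(gt_eqF u0) ?implybT //.
  by rewrite powR_mulrn // ltW.
have : u `^ p / u ^+ 2 <= N ^- 2 * u `^ p.
  rewrite mulrC ler_wpM2r //.
  rewrite lef_pV2 ?posrE ?exprn_gt0 //.
  by rewrite lerXn2r ?nnegrE ?ltW.
have := powR_ge0 N (p - 2); lra.
Qed.

Lemma pabs_decomp p x : 2 < p ->
  pabs p x `^ (p - 2) * x ^+ 2 =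
  pabs p x `^ p - (p ^+ 2)^-1 * pabs p x `^ (p - 2).
Proof.
move=> p2; have p0 : 0 < p by lra.
have u0 := pabs_gt0 p x p0.
have -> : pabs p x `^ p = pabs p x `^ (p - 2) * pabs p x ^+ 2.
  rewrite -powR_mulrn ?ltW // -powRD ?(gt_eqF u0) ?implybT //.
  congr (_ `^ _); rewrite /=; lra.
rewrite pabs_sqr; ring.
Qed.
End pabs_facts.
Section gen.
Context d (T : measurableType d) (R : realType) (mu : {measure set T -> \bar R})
  (D : set T) (mD : measurable D) (Dfin : (mu D < +oo)%E).

Lemma int_cst (k : R) : mu.-integrable D (EFin \o cst k).
Proof.
apply/integrableP; split; first by apply/measurable_EFinP; exact: measurable_cst.
rewrite (eq_integral (fun _ => (`|k|)%:E)); last by move=> x _.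
rewrite integral_cst //.
apply: lte_mul_pinfty => //.
Qed.

Lemma int_dom (f h : T -> R) (c e : R) : measurable_fun D f ->
  mu.-integrable D (EFin \o h) ->
  (forall x, D x -> `|f x| <= c * `|h x| + e) -> mu.-integrable D (EFin \o f).
Proof.
move=> mf ih hb.
have ig : mu.-integrable D (EFin \o (fun x => c * `|h x| + e)).
  have := integrableD mD (integrableZl mD c (integrable_norm ih)) (int_cst e).
  apply: eq_integrable => // x _ /=; by [].
apply: (le_integrable mD _ _ ig).
  exact/measurable_EFinP.
move=> x Dx /=; rewrite lee_fin; apply: le_trans (hb _ Dx) _; exact: ler_norm.
Qed.
End gen.
Arguments int_cst {d T R mu D} mD Dfin k.
Arguments int_dom {d T R mu D} mD Dfin {f h} c e.

Section lp_facts.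
Context {R : realType} (n : nat) (lam : {measure set (n.-tuple R) -> \bar R})
  (O : set (n.-tuple R)) (mO : measurable O) (Ofin : (lam O < +oo)%E).

Lemma mpow (f : n.-tuple R -> R) (p : R) : measurable_fun O f ->
  measurable_fun O (fun x => `|f x| `^ p).
Proof.
move=> mf.
exact: (measurableT_comp (measurable_powR p) (measurableT_comp (@normr_measurable R setT) mf)).
Qed.

Lemma mpabs (f : n.-tuple R -> R) (p : R) : measurable_fun O f ->
  measurable_fun O (fun x => pabs p (f x)).
Proof.
move=> mf.
apply: (eq_measurable_fun (fun x => (f x ^+ 2 + (p ^+ 2)^-1) `^ (2^-1))).
  move=> x _; rewrite powR12_sqrt //; apply: addr_ge0; first exact: sqr_ge0.
  by rewrite invr_ge0 sqr_ge0.
apply: (measurableT_comp (measurable_powR _)).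
apply: measurable_funD; last exact: measurable_cst.
exact: measurable_funX.
Qed.

Lemma mpabs_pow (f : n.-tuple R -> R) (p q : R) : measurable_fun O f ->
  measurable_fun O (fun x => pabs p (f x) `^ q).
Proof.
move=> mf; exact: (measurableT_comp (measurable_powR q) (mpabs _ p mf)).
Qed.

Lemma Lp_pow_int p f : in_Lp lam O p f ->
  lam.-integrable O (EFin \o (fun x => `|f x| `^ p)).
Proof.
move=> [mf fin]; apply/integrableP; split.
  by apply/measurable_EFinP; exact: mpow.
rewrite (eq_integral (fun x => (`|f x| `^ p)%:E)) //.
by move=> x _ /=; rewrite ger0_norm // powR_ge0.
Qed.

Lemma Lp_int p f : 1 <= p -> in_Lp lam O p f -> lam.-integrable O (EFin \o f).
Proof.
move=> p1 hf; apply: (int_dom mO Ofin 1 1 hf.1 (Lp_pow_int _ _ hf)).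
by move=> x _; exact: abs_le_pow.
Qed.

Lemma pabs_pow_int p f : 1 <= p -> in_Lp lam O p f ->
  lam.-integrable O (EFin \o (fun x => pabs p (f x) `^ p)).
Proof.
move=> p1 hf; apply: (int_dom mO Ofin (2 `^ p) ((2 / p) `^ p)
  (mpabs_pow _ p p hf.1) (Lp_pow_int _ _ hf)).
move=> x _; rewrite ger0_norm ?powR_ge0 // (ger0_norm (powR_ge0 _ _)).
exact: pabs_pow_le.
Qed.
End lp_facts.
Arguments mpow {R n O f} p.
Arguments mpabs {R n O f} p.
Arguments mpabs_pow {R n O f} p q.
Arguments Lp_pow_int {R n lam O p f}.
Arguments Lp_int {R n lam O} mO Ofin {p f}.
Arguments pabs_pow_int {R n lam O} mO Ofin {p f}.

Ltac mfs := repeat first [ assumption | exact: measurable_cst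
  | apply: measurable_funB | apply: measurable_funD | apply: measurable_funM
  | apply: measurable_indic; assumption
  | apply: (measurableT_comp (@normr_measurable _ setT)) ].

Section lowerN.
Context {R : realType} (n : nat) (lam : {measure set (n.-tuple R) -> \bar R})
  (O : set (n.-tuple R)) (mO : measurable O) (Ofin : (lam O < +oo)%E).

Lemma Rint_indic (A : set (n.-tuple R)) : measurable A -> A `<=` O ->
  \int[lam]_(x in O) (\1_A x : R) = fine (lam A).
Proof.
move=> mA AO; rewrite /Rintegral integral_indic //.
by rewrite setIidl.
Qed.

Lemma lowerN (A : set (n.-tuple R)) (p m : R) (f : n.-tuple R -> R) :
  measurable A -> A `<=` O -> 1 < p -> 0 < m -> in_Lp lam O p f ->
  m * fine (lam A) <= \int[lam]_(x in O) (`|f x| * \1_A x) ->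
  fine (lam A) * m `^ p <= \int[lam]_(x in O) (pabs p (f x) `^ p).
Proof.
move=> mA AO p1 m0 hf hX.
have mf := hf.1.
have p0 : 0 < p by lra.
have iU := pabs_pow_int mO Ofin (ltW p1) hf.
have iFf := Lp_int mO Ofin (ltW p1) hf.
have iF : lam.-integrable O (EFin \o (fun x => `|f x| * \1_A x)).
  apply: (int_dom mO Ofin 1 0 _ iFf); first by mfs.
  move=> x _; rewrite normrM normr_id mul1r addr0.
  rewrite indicE; case: (x \in A); rewrite ?normr1 ?normr0 ?mulr1 ?mulr0 //.
have iI : lam.-integrable O (EFin \o (fun x => (\1_A x : R))).
  apply: (int_dom mO Ofin 0 1 _ iFf); first by mfs.
  move=> x _; rewrite mul0r add0r.
  rewrite indicE; case: (x \in A); rewrite ?normr1 ?normr0 //.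
set b := m `^ (p - 1).
have b0 : 0 <= b by apply: powR_ge0.
have iG : lam.-integrable O (EFin \o (fun x => p * (`|f x| * \1_A x) - (p - 1) * m * \1_A x)).
  apply: (int_dom mO Ofin p ((p - 1) * m) _ iFf); first by mfs.
  move=> x _; have t0 := normr_ge0 (f x).
  rewrite indicE; case: (x \in A) => /=; rewrite ?mulr1 ?mulr0 ?subr0 ?normr0.
    rewrite ler_norml; apply/andP; split; nra.
  nra.
have hle := le_Rintegral mO (integrableZl mO b iG) iU.
have h1 : forall x, O x ->
    b * (p * (`|f x| * \1_A x) - (p - 1) * m * \1_A x) <= pabs p (f x) `^ p.
  move=> x Ox; rewrite indicE; case: (x \in A) => /=.
    rewrite !mulr1; apply: le_trans (young_tangent p (`|f x|) m p1 (normr_ge0 (f x)) m0) _.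
    apply: ge0_ler_powR; rewrite ?nnegrE ?normr_ge0; try lra.
      exact: ltW (pabs_gt0 _ _ p0).
    exact: pabs_ge _ _ p0.
  by rewrite !mulr0 subr0 mulr0 powR_ge0.
have {}hle := hle h1.
rewrite RintegralZl // in hle.
have eG : \int[lam]_(x in O) (p * (`|f x| * \1_A x) - (p - 1) * m * \1_A x)
    = p * \int[lam]_(x in O) (`|f x| * \1_A x) - (p - 1) * m * fine (lam A).
  rewrite RintegralB //; last by apply: (integrableZl mO ((p - 1) * m) iI).
    rewrite RintegralZl // RintegralZl //; last first.
    by rewrite Rint_indic.
  by apply: (integrableZl mO p iF).
rewrite eG in hle; apply: le_trans hle.
have -> : m `^ p = b * m.
  have -> : m `^ p = m `^ ((p - 1) + 1) by rewrite subrK.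
  by rewrite powRD ?powRr1 ?ltW // (gt_eqF m0) implybT.
set X := \int[lam]_(x in O) _ in hX *.
have h3 : 0 <= b * p * (X - m * fine (lam A)).
  by apply: mulr_ge0; [apply: mulr_ge0; lra | lra].
have -> : b * (p * X - (p - 1) * m * fine (lam A)) =
  fine (lam A) * (b * m) + b * p * (X - m * fine (lam A)) by ring.
lra.
Qed.
End lowerN.

Section lowerI.
Context {R : realType} (n : nat) (lam : {measure set (n.-tuple R) -> \bar R})
  (O : set (n.-tuple R)) (mO : measurable O) (Ofin : (lam O < +oo)%E).

Lemma lowerI (p : R) (f : n.-tuple R -> R) : 2 < p -> in_Lp lam O p f ->
  0 < fine (lam O) -> 0 < dotLnorm lam O p f ->
  dotLnorm lam O p f - 2 / (p ^+ 2 * dotLnorm lam O p f)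
    <= int_against_mu_p lam O p f.
Proof.
move=> p2 hf V0 N0.
have mf := hf.1.
have p0 : 0 < p by lra.
have p1 : 1 <= p by lra.
have iU := pabs_pow_int mO Ofin p1 hf.
rewrite /int_against_mu_p.
set V := fine (lam O) in V0 *.
set N := dotLnorm lam O p f in N0 *.
set Q := \int[lam]_(x in O) pabs p (f x) `^ p.
have Q0 : 0 <= Q by apply: Rintegral_ge0 => x _; exact: powR_ge0.
have hNp : N `^ p = V^-1 * Q.
  rewrite /N /dotLnorm -/V -/Q -powRrM mulVf ?gt_eqF // powRr1 //.
  by apply: mulr_ge0 => //; rewrite invr_ge0 ltW.
set c := N `^ (p - 1).
have c0 : 0 < c by apply: powR_gt0.
have hcN : N `^ p = c * N.
  have -> : N `^ p = N `^ ((p - 1) + 1) by rewrite subrK.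
  by rewrite powRD ?powRr1 ?ltW // (gt_eqF N0) implybT.
have hcN2 : N `^ (p - 2) = c / N.
  have -> : p - 2 = (p - 1) - 1 by ring.
  by rewrite powRB ?powRr1 ?ltW // (gt_eqF N0) implybT.
set al := 1 - (p ^+ 2)^-1 * N ^- 2.
set be := (p ^+ 2)^-1 * N `^ (p - 2).
have ip2 : 0 <= (p ^+ 2)^-1 by rewrite invr_ge0 exprn_ge0 // ltW.
have iH : lam.-integrable O (EFin \o
    (fun x => pabs p (f x) `^ (p - 2) * f x ^+ 2 / c)).
  apply: (int_dom mO Ofin c^-1 0 _ iU).
    apply: measurable_funM; last exact: measurable_cst.
    apply: measurable_funM; first exact: mpabs_pow.
    exact: measurable_funX.
  move=> x _; rewrite addr0 (ger0_norm (powR_ge0 _ _)).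
  have d := pabs_decomp p (f x) p2.
  have hnn : 0 <= pabs p (f x) `^ (p - 2) * f x ^+ 2.
    by apply: mulr_ge0; [exact: powR_ge0 | exact: sqr_ge0].
  rewrite ger0_norm; last by apply: divr_ge0 => //; exact: ltW.
  rewrite mulrC; apply: ler_wpM2l; first by rewrite invr_ge0 ltW.
  have := mulr_ge0 ip2 (powR_ge0 (pabs p (f x)) (p - 2)); lra.
have iK0 : lam.-integrable O (EFin \o
    (fun x => al * pabs p (f x) `^ p - be)).
  apply: (int_dom mO Ofin (`|al|) (`|be|) _ iU).
    apply: measurable_funB; last exact: measurable_cst.
    apply: measurable_funM; first exact: measurable_cst.
    exact: mpabs_pow.
  move=> x _.
  by apply: le_trans (ler_normB _ _) _; rewrite normrM.
have iK : lam.-integrable O (EFin \o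
    (fun x => c^-1 * (al * pabs p (f x) `^ p - be))).
  exact: (integrableZl mO c^-1 iK0).
have hle : \int[lam]_(x in O) (c^-1 * (al * pabs p (f x) `^ p - be))
    <= \int[lam]_(x in O) (pabs p (f x) `^ (p - 2) * f x ^+ 2 / c).
  apply: le_Rintegral => // x _.
  rewrite [X in _ <= X]mulrC ler_pM2l ?invr_gt0 //.
  rewrite pabs_decomp // /al /be.
  have := pow_split p (pabs p (f x)) N (ltW p2) (pabs_gt0 p (f x) p0) N0.
  have := powR_ge0 (pabs p (f x)) p.
  move=> h1 h2.
  have := ler_wpM2l ip2 h2; lra.
have step : V^-1 * \int[lam]_(x in O) (c^-1 * (al * pabs p (f x) `^ p - be))
   <= V^-1 * \int[lam]_(x in O) (pabs p (f x) `^ (p - 2) * f x ^+ 2 / c).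
  by rewrite ler_pM2l ?invr_gt0.
apply: le_trans step.
rewrite RintegralZl // RintegralB //; last exact: int_cst.
  2: exact: (integrableZl mO al iU).
rewrite RintegralZl // Rintegral_cst // -/V -/Q.
have eQ : Q = V * (c * N).
  by rewrite -hcN hNp mulrA mulfV ?gt_eqF // mul1r.
rewrite eQ /al /be hcN2.
rewrite le_eqVlt; apply/orP; left; apply/eqP; field.
by rewrite !gt_eqF.
Qed.
End lowerI.

Lemma bounded_fin {R : realType} (n : nat) (lam : {measure set (n.-tuple R) -> \bar R})
  (O : set (n.-tuple R)) :
  is_lebesgue_measure_n lam -> bounded_n O -> measurable O -> (lam O < +oo)%E.
Proof.
move=> hleb [M hM] mO.
set c := `|M|.
set a : n.-tuple R := [tuple (- c) | i < n].
set b : n.-tuple R := [tuple c | i < n].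
have hab : forall i, tnth a i <= tnth b i.
  move=> i; rewrite !tnth_mktuple; have := normr_ge0 M; rewrite -/c; lra.
have hB := hleb a b hab.
set B := [set x | _] in hB.
have mB : measurable B.
  have -> : B = \bigcap_(i in [set: 'I_n]) ((fun x : n.-tuple R => tnth x i) @^-1` `[-c, c]).
    apply/seteqP; split => x /=.
      move=> hx i _ /=; have := hx i; rewrite !tnth_mktuple.
      by rewrite in_itv.
    move=> hx i; have := hx i Logic.I; rewrite /= !tnth_mktuple.
    by rewrite in_itv.
  apply: fin_bigcap_measurable; first exact: finite_finset.
  move=> i _; rewrite -[X in measurable X]setTI.
  exact: (measurable_tnth i measurableT (measurable_itv _)).
have OB : O `<=` B.
  move=> x Ox i; rewrite !tnth_mktuple.
  have := hM x Ox i; rewrite -/c => h.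
  have := ler_norm M; rewrite -/c.
  rewrite ler_norml in h. move: h => /andP[h1 h2]. move=> h3.
  apply/andP; split; lra.
apply: (le_lt_trans (le_measure _ _ _ OB)); rewrite ?inE //.
by move: hB => /= ->; rewrite ltry.
Qed.

Lemma liminf_ge {R : realType} (u : (\bar R)^nat) (x : \bar R) :
  (\forall j \near \oo, (x <= u j)%E) -> (x <= limn_einf u)%E.
Proof.
move=> [N _ hN]; rewrite limn_einf_lim; apply: lime_ge; first exact: is_cvg_einfs.
exists N => // k /= kN.
apply/ereal_infP => _ [j /= kj <-]; apply: hN => /=.
exact: leq_trans kN kj.
Qed.

Lemma int_mu_ge0 {R : realType} (n : nat) (lam : {measure set (n.-tuple R) -> \bar R})
  (O : set (n.-tuple R)) p f : 0 <= int_against_mu_p lam O p f.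
Proof.
rewrite /int_against_mu_p; apply: mulr_ge0.
  by rewrite invr_ge0; apply: fine_ge0; exact: measure_ge0.
apply: Rintegral_ge0 => x _; apply: divr_ge0; last exact: powR_ge0.
by apply: mulr_ge0; [exact: powR_ge0 | exact: sqr_ge0].
Qed.

Lemma powR_ge_lin {R : realType} (r x : R) : 0 < r -> 1 + x * ln r <= r `^ x.
Proof. by move=> r0; rewrite /powR gt_eqF // expR_ge1Dx. Qed.

Lemma N_lower {R : realType} (V Q a m p : R) : 0 < V -> 0 < a -> 0 < m -> 0 < p ->
  a * m `^ p <= Q -> (V^-1 * a) `^ p^-1 * m <= (V^-1 * Q) `^ p^-1.
Proof.
move=> V0 a0 m0 p0 h.
have iV : 0 < V^-1 by rewrite invr_gt0.
have -> : (V^-1 * a) `^ p^-1 * m = (V^-1 * (a * m `^ p)) `^ p^-1.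
  rewrite mulrA [RHS]powRM.
  - by rewrite -powRrM mulfV ?gt_eqF // powRr1 // ltW.
  - by apply: mulr_ge0; exact: ltW.
  - exact: powR_ge0.
have ha : 0 <= a * m `^ p by apply: mulr_ge0; [exact: ltW|exact: powR_ge0].
apply: ge0_ler_powR; rewrite ?nnegrE.
- by rewrite invr_ge0 ltW.
- by apply: mulr_ge0 => //; exact: ltW.
- by apply: mulr_ge0; [exact: ltW | exact: le_trans h].
- by rewrite ler_pM2l.
Qed.

Theorem mainTheorem12 (R : realType) (n : nat)
  (lam : {measure set (n.-tuple R) -> \bar R})
  (Omega : set (n.-tuple R))
  (p : nat -> R) (xi : nat -> n.-tuple R -> R) (xi_inf : n.-tuple R -> R) :
  is_lebesgue_measure_n lam ->
  open_n Omega -> bounded_n Omega -> measurable Omega ->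
  p @ \oo --> +oo ->
  (forall j, in_Lp lam Omega (p j) (xi j)) ->
  (forall j, {ae lam, forall x, Omega x -> 0 <= xi j x}) ->
  in_Linf lam Omega xi_inf ->
  (forall k : R, 1 < k -> forall g : n.-tuple R -> R,
     in_Lp lam Omega (k / (k - 1)) g ->
     (fun j => \int[lam]_(x in Omega) (xi j x * g x)) @ \oo
       --> \int[lam]_(x in Omega) (xi_inf x * g x)) ->
  (ess_sup_on lam Omega xi_inf
     <= limn_einf (fun j => (int_against_mu_p lam Omega (p j) (xi j))%:E))%E.
Proof.
move=> hleb hopen hbdd mO hp hLp hpos hLinf hweak.
have Ofin := @bounded_fin R n lam Omega hleb hbdd mO.
set E := ess_sup_on lam Omega xi_inf.
set u := fun j => (int_against_mu_p lam Omega (p j) (xi j))%:E.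
suff key : forall M : R, (M%:E < E)%E -> (M%:E <= limn_einf u)%E.
  have Elt : (E < +oo)%E := hLinf.2.
  case eE : E Elt => [e| |] Elt //; last by rewrite leNye.
  rewrite eE in key.
  rewrite leNgt; apply/negP => hy.
  move: hy; case ey: (limn_einf u) => [r| |] hy //.
  - have := key ((r + e) / 2); rewrite ey !lte_fin !lee_fin in hy *.
    move=> h; have := h ltac:(lra); lra.
  - have := key (e - 1); rewrite ey !lte_fin => h.
    by have := h ltac:(lra); rewrite leeNy_eq.
move=> M ME.
have [M0|M0] := ltP M 0.
  apply: liminf_ge; apply: nearW => j; rewrite /u lee_fin.
  have := @int_mu_ge0 R n lam Omega (p j) (xi j); lra.
have Elt : (E < +oo)%E := hLinf.2.
have Efin : E \is a fin_num.
  by rewrite fin_numElt Elt andbT; apply: lt_trans ME; exact: ltNyr.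
set e := fine E.
have eE : E = e%:E by rewrite fineK.
have Me : M < e by rewrite -lte_fin -eE.
set M' := (M + e) / 2.
set m := (M + M') / 2.
set m' := (M + m) / 2.
have o1 : M < m' by rewrite /m' /m /M'; lra.
have o2 : m' < m by rewrite /m' /m /M'; lra.
have o3 : m < M' by rewrite /m /M'; lra.
have o4 : M' < e by rewrite /M'; lra.
have hB : \forall x \ae lam, Omega x -> ((`|xi_inf x|)%:E <= (e + 1)%:E)%E.
  have : (E < (e + 1)%:E)%E by rewrite eE lte_fin; lra.
  rewrite /E /ess_sup_on => /ereal_inf_lt [y hy ylt].
  apply: filterS hy => x h Ox; exact: le_trans (h Ox) (ltW ylt).
have hnot : ~ (\forall x \ae lam, Omega x -> ((`|xi_inf x|)%:E <= M'%:E)%E).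
  move=> h; have : (E <= M'%:E)%E by apply: ereal_inf_lbound; exact: h.
  rewrite eE lee_fin; lra.
pose A (s : R) := Omega `&` [set x | M' < s * xi_inf x].
have mA : forall s, measurable (A s).
  move=> s; have mf : measurable_fun Omega (fun x => s * xi_inf x).
    by apply: measurable_funM; [exact: measurable_cst | exact: hLinf.1].
  have := mf mO `]M', +oo[%classic (measurable_itv _).
  congr measurable; apply/seteqP; split => x /= [Ox h]; split => //;
    by move: h; rewrite /= in_itv /= andbT.
have AO : forall s, A s `<=` Omega by move=> s x [].
have [s [hs As0]] : exists s : R, `|s| = 1 /\ (0 < lam (A s))%E.
  apply: contrapT => hc; apply: hnot.
  have h0 : forall s, `|s| = 1 -> lam (A s) = 0.
    move=> s hs; apply/eqP; rewrite eq_le measure_ge0 andbT leNgt; apply/negP => h.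
    by apply: hc; exists s.
  have ng : forall s, `|s| = 1 -> lam.-negligible (A s).
    by move=> s hs; exists (A s); split => //; exact: h0.
  apply: (negligibleS _ (negligibleU (ng 1 (normr1 _)) (ng (-1) (normrN1 _)))).
  move=> x /= hx.
  have Ox : Omega x by apply: contrapT => nO; apply: hx => /nO.
  have hlt : M' < `|xi_inf x|.
    by rewrite ltNge -lee_fin; apply/negP => h'; apply: hx.
  case: (ler0P (xi_inf x)) => hx0 in hlt *.
    by right; split => //=; rewrite mulN1r.
  by left; split => //=; rewrite mul1r.
set As := A s.
have mAs : measurable As := mA s.
have AsO : As `<=` Omega := AO s.
have leAO : (lam As <= lam Omega)%E by apply: le_measure; rewrite ?inE.
have Asfin : (lam As < +oo)%E := le_lt_trans leAO Ofin.
set a := fine (lam As).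
have a0 : 0 < a by apply: fine_gt0; rewrite As0 Asfin.
set V := fine (lam Omega).
have aV : a <= V.
  apply: fine_le => //; rewrite ge0_fin_numE ?measure_ge0 //.
have V0 : 0 < V by lra.
pose g := fun x => s * (\1_As x : R).
have hgn : forall x, `|g x| = \1_As x.
  move=> x; rewrite /g normrM hs mul1r indicE.
  by case: (x \in As); rewrite ?normr1 ?normr0.
have mg : measurable_fun Omega g.
  by apply: measurable_funM; [exact: measurable_cst | exact: measurable_indic].
have hg : in_Lp lam Omega (2 / (2 - 1)) g.
  split => //.
  rewrite (eq_integral (fun x => (\1_As x : R)%:E)); last first.
    move=> x _; congr EFin; rewrite hgn indicE.
    case: (x \in As) => /=; first by rewrite powR1.
    by rewrite powR0 //; apply/eqP => h; move: h; lra.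
  by rewrite integral_indic // setIidl.
have hlim := hweak 2 ltac:(lra) g hg.
set L := \int[lam]_(x in Omega) (xi_inf x * g x) in hlim.
have M'0 : 0 < M' by lra.
have pw : forall x, Omega x -> M' * (\1_As x : R) <= xi_inf x * g x.
  move=> x Ox; rewrite /g indicE; case hx: (x \in As) => /=.
    move: hx => /set_mem [_ /= h]; lra.
  by rewrite !mulr0.
have nn : forall x, Omega x -> 0 <= xi_inf x * g x.
  move=> x Ox; apply: le_trans (pw x Ox); apply: mulr_ge0; first lra.
  by rewrite indicE; case: (x \in As).
have mxg : measurable_fun Omega (fun x => xi_inf x * g x).
  by apply: measurable_funM => //; exact: hLinf.1.
have hlow : ((M' * a)%:E <= \int[lam]_(x in Omega) (xi_inf x * g x)%:E)%E.
  have -> : (M' * a)%:E = (\int[lam]_(x in Omega) (M' * (\1_As x : R))%:E)%E.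
    rewrite (eq_integral (fun x => (M'%:E * (\1_As x : R)%:E)%E)); last first.
      by move=> x _; rewrite EFinM.
    rewrite integralZl //; last first.
      apply/integrableP; split; first by apply/measurable_EFinP; exact: measurable_indic.
      rewrite (eq_integral (fun x => (\1_As x : R)%:E)).
        by rewrite integral_indic // setIidl.
      by move=> x _; rewrite gee0_abs // lee_fin indicE; case: (x \in As).
    by rewrite integral_indic // setIidl // EFinM /a fineK // ge0_fin_numE ?measure_ge0.
  apply: ge0_le_integral => //.
  - move=> x Ox; rewrite lee_fin; apply: mulr_ge0; first lra.
    by rewrite indicE; case: (x \in As).
  - apply/measurable_EFinP; apply: measurable_funM; first exact: measurable_cst.
    exact: measurable_indic.
  - exact/measurable_EFinP.
have hup : (\int[lam]_(x in Omega) (xi_inf x * g x)%:E <= ((e + 1) * V)%:E)%E.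
  have -> : ((e + 1) * V)%:E = (\int[lam]_(x in Omega) (cst (e + 1)%:E x))%E.
    by rewrite integral_cst // /V EFinM fineK // ge0_fin_numE ?measure_ge0.
  apply: ae_ge0_le_integral => //.
  - exact/measurable_EFinP.
  - by move=> x _ /=; rewrite lee_fin; lra.
  - move: hB; apply: filterS => x h Ox; rewrite /= lee_fin.
    have := h Ox; rewrite lee_fin => h2; apply: le_trans h2.
    apply: le_trans (ler_norm _) _; rewrite normrM hgn indicE.
    by case: (x \in As); rewrite ?mulr1 ?mulr0.
have hL : M' * a <= L.
  have hfin : (\int[lam]_(x in Omega) (xi_inf x * g x)%:E)%E \is a fin_num.
    rewrite ge0_fin_numE; last first.
      apply: le_trans hlow; rewrite lee_fin; apply: mulr_ge0; lra.
    by apply: le_lt_trans hup _; rewrite ltry.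
  by rewrite /L /Rintegral -lee_fin fineK.
have hma : m * a < L.
  apply: lt_le_trans hL; rewrite ltr_pM2r //.
have ev1 := cvgr_gt L hlim (m * a) hma.
set r := V^-1 * a.
have r0 : 0 < r by rewrite /r mulr_gt0 // invr_gt0.
set lr := ln r.
set P := Num.max 3 (Num.max (- (m * lr) / (m - m')) (2 / (m' * (m' - M)))).
have ev2 := cvgry_ge hp P.
apply: liminf_ge.
near=> j.
have h1 : m * a < \int[lam]_(x in Omega) (xi j x * g x) by near: j; exact: ev1.
have h2 : P <= p j by near: j; exact: ev2.
have hP1 : 3 <= P by rewrite /P le_max lexx.
have hP2 : - (m * lr) / (m - m') <= P by rewrite /P !le_max lexx orbT.
have hP3 : 2 / (m' * (m' - M)) <= P by rewrite /P !le_max lexx !orbT.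
set q := p j in h2 *.
have q3 : 3 <= q by lra.
have q0 : 0 < q by lra.
have hf := hLp j.
rewrite /u lee_fin -/q.
have q1 : 1 < q by lra.
have m0 : 0 < m by lra.
have m'0 : 0 < m' by lra.
have iFf := Lp_int mO Ofin (ltW q1) hf.
have hX : m * a <= \int[lam]_(x in Omega) (`|xi j x| * \1_As x).
  apply: le_trans (ltW h1) _.
  apply: le_Rintegral => //.
  - apply: (int_dom mO Ofin 1 0 _ iFf).
      by apply: measurable_funM => //; exact: hf.1.
    move=> x _; rewrite normrM hgn mul1r addr0 indicE.
    by case: (x \in As); rewrite ?mulr1 ?mulr0.
  - apply: (int_dom mO Ofin 1 0 _ iFf).
      apply: measurable_funM; last exact: measurable_indic.
      exact: (measurableT_comp (@normr_measurable _ setT) hf.1).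
    move=> x _; rewrite normrM normr_id mul1r addr0 indicE.
    by case: (x \in As); rewrite ?normr1 ?normr0 ?mulr1 ?mulr0.
  - move=> x _; rewrite /g indicE; case: (x \in As) => /=; rewrite ?mulr1 ?mulr0 //.
    by apply: le_trans (ler_norm _) _; rewrite normrM hs mulr1.
have hQ := @lowerN R n lam Omega mO Ofin As q m (xi j) mAs AsO q1 m0 hf hX.
have hN := @N_lower R V _ a m q V0 a0 m0 q0 hQ.
set N := dotLnorm lam Omega q (xi j).
have eN : N = (V^-1 * \int[lam]_(x in Omega) pabs q (xi j x) `^ q) `^ q^-1 by [].
rewrite -eN -/r in hN.
have hr := powR_ge_lin r (q^-1) r0; rewrite -/lr in hr.
have hNm : m' <= N.
  have h3 : m * (1 + q^-1 * lr) <= N.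
    apply: le_trans hN; rewrite [X in _ <= X]mulrC ler_pM2l //.
  have h4 : - (m * lr) <= q * (m - m').
    by rewrite -ler_pdivrMr; [exact: le_trans hP2 _ | lra].
  have h5 : m * (1 + q^-1 * lr) - m' = q^-1 * (q * (m - m') + m * lr).
    by field; rewrite gt_eqF.
  have h6 : 0 <= q^-1 * (q * (m - m') + m * lr).
    by apply: mulr_ge0; [rewrite invr_ge0; lra | lra].
  lra.
have N0 : 0 < N by lra.
have hI := @lowerI R n lam Omega mO Ofin q (xi j) ltac:(lra) hf V0 N0.
apply: le_trans hI.
have h7 : 2 <= q * (m' * (m' - M)).
  by rewrite -ler_pdivrMr; [exact: le_trans hP3 _ | apply: mulr_gt0; lra].
have h8 : 2 / (q ^+ 2 * N) <= m' - M.
  rewrite ler_pdivrMr; last by apply: mulr_gt0 => //; apply: exprn_gt0.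
  have h9 : q * m' <= q ^+ 2 * N.
    rewrite expr2 -mulrA ler_pM2l //; nra.
  have h10 : 0 <= m' - M by lra.
  have := ler_wpM2l h10 h9; nra.
rewrite -/N; lra.
Unshelve. all: end_near.
Qed.
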